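(* Let $\mathcal{X}\subseteq\mathbb{R}^d$ be nonempty, closed and convex, let $f:\mathbb{R}^d\to\mathbb{R}$ be convex (not necessarily differentiable), and assume $\mathcal{X}_\star:=\operatorname{arg\,min}_{x\in\mathcal{X}}f(x)$ is nonempty. Assume there is $G>0$ with $\|g\|\le G$ for all $x\in\mathcal{X}$ and all $g\in\partial f(x)$. Let $x_\star\in\mathcal{X}_\star$ and $x_0\in\mathcal{X}$, and generate $\{x_k\}$ as follows: if $0\notin\partial f(x_k)$, pick $g_k\in\partial f(x_k)$, set $t_k:=\frac{f(x_k)-f(x_\star)}{\|g_k\|}$ and $x_{k+1}\in\operatorname{arg\,min}_{z\in\mathcal{X}\cap\mathcal{B}(x_k,t_k)}\langle g_k,z\rangle$; if $0\in\partial f(x_k)$, then $t_k=0$ and the method terminates. Then for every $K\ge1$, $$\frac1K\sum_{k=0}^{K-1}(f(x_k)-f(x_\star))^2\le\frac{G^2\|x_0-x_\star\|^2}{K},$$ and $\hat x_K:=\frac1K\sum_{k=0}^{K-1}x_k$ satisfies $f(\hat x_K)-f(x_\star)\le\frac{G\|x_0-x_\star\|}{\sqrt K}$.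
   Context: $\partial f(x)$ is the convex subdifferential of $f$ at $x$. $\|\cdot\|$ is the Euclidean norm, $\mathcal{B}(x,t):=\{y:\|y-x\|\le t\}$. With $t_k=0$ the feasible set is $\{x_k\}$, so a terminated run stays at $x_k$. *)

(* Defs.v *)
From HB Require Import structures.
From mathcomp Require Import all_boot all_order all_algebra.
From mathcomp Require Import all_classical all_reals all_analysis.
Set Implicit Arguments. Unset Strict Implicit. Unset Printing Implicit Defensive.
Import Order.TTheory GRing.Theory Num.Theory.
Import numFieldNormedType.Exports.
Local Open Scope ring_scope.
Local Open Scope classical_set_scope.

Section Defs.
Variables (R : realType) (d : nat).

Definition dotv (u v : 'rV[R]_d) : R := \sum_(i < d) u 0 i * v 0 i.
Definition enorm (u : 'rV[R]_d) : R := Num.sqrt (dotv u u).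

Definition eball (x : 'rV[R]_d) (t : R) : set 'rV[R]_d :=
  [set y | enorm (y - x) <= t].

Definition convex_fun (f : 'rV[R]_d -> R) : Prop :=
  forall x y (t : R), 0 <= t <= 1 ->
    f (t *: x + (1 - t) *: y) <= t * f x + (1 - t) * f y.

Definition subdiff (f : 'rV[R]_d -> R) (x : 'rV[R]_d) : set 'rV[R]_d :=
  [set g | forall y, f x + dotv g (y - x) <= f y].

Definition is_argmin_on (X : set 'rV[R]_d) (h : 'rV[R]_d -> R) (z : 'rV[R]_d) :=
  X z /\ forall y, X y -> h z <= h y.

End Defs.

(* Main.v *)
Require Import Defs.
From HB Require Import structures.
From mathcomp Require Import all_boot all_order all_algebra.
From mathcomp Require Import all_classical all_reals all_analysis.
From mathcomp Require Import ring lra.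
Import Order.TTheory GRing.Theory Num.Theory.
Import numFieldNormedType.Exports.
Local Open Scope ring_scope.
Local Open Scope classical_set_scope.

Section H.
Context {R : realType} {d : nat}.
Implicit Types u v w : 'rV[R]_d.

Lemma convX (X : set 'rV[R]_d) a b (p : R) : convex_set X -> X a -> X b ->
  0 <= p -> p <= 1 -> X (p *: a + (1 - p) *: b).
Proof.
move=> cX Xa Xb p0 p1.
have := cX a b (Itv01 p0 p1).
rewrite !inE => /(_ Xa Xb). by [].
Qed.

Lemma dotvC u v : dotv u v = dotv v u.
Proof. by apply: eq_bigr => i _; rewrite mulrC. Qed.
Lemma dotvDl u v w : dotv (u + v) w = dotv u w + dotv v w.
Proof. by rewrite /dotv -big_split; apply: eq_bigr => i _; rewrite mxE mulrDl. Qed.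
Lemma dotvZl (a : R) u v : dotv (a *: u) v = a * dotv u v.
Proof. by rewrite /dotv mulr_sumr; apply: eq_bigr => i _; rewrite mxE mulrA. Qed.
Lemma dotvNl u v : dotv (- u) v = - dotv u v.
Proof. by rewrite -scaleN1r dotvZl mulN1r. Qed.
Lemma dotvBl u v w : dotv (u - v) w = dotv u w - dotv v w.
Proof. by rewrite dotvDl dotvNl. Qed.
Lemma dotvDr u v w : dotv w (u + v) = dotv w u + dotv w v.
Proof. by rewrite dotvC dotvDl !(dotvC w). Qed.
Lemma dotvZr (a : R) u v : dotv v (a *: u) = a * dotv v u.
Proof. by rewrite dotvC dotvZl dotvC. Qed.
Lemma dotvBr u v w : dotv w (u - v) = dotv w u - dotv w v.
Proof. by rewrite dotvC dotvBl !(dotvC w). Qed.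
Lemma dotv_ge0 u : 0 <= dotv u u.
Proof. by apply: sumr_ge0 => i _; rewrite -expr2 sqr_ge0. Qed.
Lemma dotv0l v : dotv 0 v = 0.
Proof. by rewrite -(scale0r 0) dotvZl mul0r. Qed.

Lemma CS u v : dotv u v ^+ 2 <= dotv u u * dotv v v.
Proof.
have [v0|vp] := eqVneq (dotv v v) 0.
  have : v = 0.
    apply/rowP => i; rewrite mxE; apply/eqP; rewrite -sqrf_eq0 expr2.
    have /psumr_eq0P H := v0.
    by apply/eqP; apply: H => // j _; rewrite -expr2 sqr_ge0.
  by move=> ->; rewrite dotvC !dotv0l expr0n /= mulr0.
have vg : 0 < dotv v v by rewrite lt_neqAle eq_sym vp dotv_ge0.
have := dotv_ge0 (dotv v v *: u - dotv u v *: v).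
rewrite !(dotvBl, dotvBr, dotvZl, dotvZr) (dotvC v u) => H.
nra.
Qed.

Lemma enorm_sqr u : enorm u ^+ 2 = dotv u u.
Proof. by rewrite /enorm sqr_sqrtr // dotv_ge0. Qed.

Lemma CS_abs u v : `|dotv u v| <= enorm u * enorm v.
Proof.
rewrite -ler_sqr ?nnegrE ?mulr_ge0 ?sqrtr_ge0 //.
by rewrite exprMn !enorm_sqr real_normK ?num_real // CS.
Qed.

Lemma enorm_ge0 u : 0 <= enorm u.
Proof. exact: sqrtr_ge0. Qed.

Lemma le_enorm u (t : R) : 0 <= t -> dotv u u <= t ^+ 2 -> enorm u <= t.
Proof.
move=> t0 H; have e0 := enorm_ge0 u; have := enorm_sqr u => E.
rewrite -E in H; nra.
Qed.

Lemma dotv_expand u w (s : R) :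
  dotv (u + s *: w) (u + s *: w) = dotv u u + 2 * s * dotv u w + s ^+ 2 * dotv w w.
Proof.
rewrite !(dotvDl, dotvDr, dotvZl, dotvZr) (dotvC w u); ring.
Qed.

Lemma dotvBB (a b : 'rV[R]_d) : dotv (a - b) (a - b) = dotv a a - 2 * dotv a b + dotv b b.
Proof. rewrite !(dotvBl, dotvBr) (dotvC b a); ring. Qed.

Lemma small_s (a T b c : R) : 0 <= c -> a <= T -> (a < T \/ b < 0) ->
  exists s : R, 0 < s <= 1 /\ a + 2 * s * b + s ^+ 2 * c <= T.
Proof.
move=> c0 aT H.
have nb0 := normr_ge0 b.
have nb : b <= `|b| := ler_norm b.
have nb' : - `|b| <= b by rewrite lerNl -normrN ler_norm.
have [H1|H1] := H.
- set e := T - a.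
  have e0 : 0 < e by rewrite /e subr_gt0.
  have Hb : 0 < `|b| + `|b| + c + 1 by lra.
  exists (Num.min 1 (e / (`|b| + `|b| + c + 1))).
  have m0 : 0 < Num.min 1 (e / (`|b| + `|b| + c + 1)).
    by rewrite lt_min ltr01 divr_gt0.
  have m1 : Num.min 1 (e / (`|b| + `|b| + c + 1)) <= 1 by rewrite ge_min lexx.
  have m2 : Num.min 1 (e / (`|b| + `|b| + c + 1)) * (`|b| + `|b| + c + 1) <= e.
    by rewrite -ler_pdivlMr // ge_min lexx orbT.
  set m := Num.min _ _ in m0 m1 m2 *.
  split; first by rewrite m0 m1.
  rewrite /e in m2.
  have mc := mulr_ge0 (ltW m0) c0.
  have h1 : m ^+ 2 * c <= m * c by rewrite expr2 -mulrA; nra.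
  have h2 : m * b <= m * `|b| by nra.
  nra.
- exists (Num.min 1 (- b / (c + 1))).
  have c1 : 0 < c + 1 by lra.
  have m0 : 0 < Num.min 1 (- b / (c + 1)).
    by rewrite lt_min ltr01 divr_gt0 // oppr_gt0.
  have m2 : Num.min 1 (- b / (c + 1)) * (c + 1) <= - b.
    by rewrite -ler_pdivlMr // ge_min lexx orbT.
  have m1 : Num.min 1 (- b / (c + 1)) <= 1 by rewrite ge_min lexx.
  set m := Num.min _ _ in m0 m1 m2 *.
  split; first by rewrite m0 m1.
  have mc := mulr_ge0 (ltW m0) c0.
  have h1 : m ^+ 2 * c <= m * c by rewrite expr2 -mulrA; nra.
  nra.
Qed.

Lemma step (X : set 'rV[R]_d) (f : 'rV[R]_d -> R) g xk xs z :
  convex_set X -> X xk -> X xs -> subdiff f xk g -> 0 < dotv g g ->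
  f xs <= f xk ->
  is_argmin_on (X `&` eball xk ((f xk - f xs) / enorm g)) (dotv g) z ->
  dotv (z - xs) (z - xs) <= dotv (xk - xs) (xk - xs) - ((f xk - f xs) / enorm g) ^+ 2.
Proof.
move=> cX Xk Xs sub gp fle [[Xz Bz] amin].
set r := f xk - f xs.
set q := enorm g.
have q0 : 0 < q by rewrite /q /enorm sqrtr_gt0.
have qq : q ^+ 2 = dotv g g by rewrite enorm_sqr.
set t := r / q.
have r0 : 0 <= r by rewrite /r subr_ge0.
have t0 : 0 <= t by rewrite divr_ge0 // ltW.
have rqt : r = q * t by rewrite /t mulrC divfK // gt_eqF.
set u := z - xk. set v := xs - xk.
have Ezs : z - xs = u - v by apply/rowP => i; rewrite /u /v !mxE; ring.
have Eks : xk - xs = - v by apply/rowP => i; rewrite /u /v !mxE; ring.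
have F1 : dotv g v <= - r.
  have := sub xs; rewrite -/v /r; lra.
have e0 := enorm_ge0 u.
have F2 : enorm u <= t := Bz.
have ee : enorm u ^+ 2 = dotv u u := enorm_sqr u.
have F4 : - (q * enorm u) <= dotv g u.
  by have := CS_abs g u; rewrite -/q ler_norml => /andP[].
have F3 : forall s : R, 0 <= s <= 1 ->
    dotv (u + s *: (v - u)) (u + s *: (v - u)) <= t ^+ 2 ->
    0 <= s * (dotv g v - dotv g u).
  move=> s /andP[s0 s1] Hs.
  have Xp : X (s *: xs + (1 - s) *: z) by apply: convX.
  have E : s *: xs + (1 - s) *: z - xk = u + s *: (v - u).
    by apply/rowP => i; rewrite /u /v !mxE; ring.
  have Bp : eball xk t (s *: xs + (1 - s) *: z).
    by rewrite /eball /= E; apply: le_enorm.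
  have := amin _ (conj Xp Bp).
  have -> : s *: xs + (1 - s) *: z = z + s *: (v - u).
    by apply/rowP => i; rewrite /u /v !mxE; ring.
  rewrite dotvDr dotvZr; rewrite dotvBr; lra.
have Hexp := dotv_expand u (v - u).
have Evu : dotv u (v - u) = dotv u v - dotv u u by rewrite [LHS]dotvBr.
have Evv : dotv (v - u) (v - u) = dotv v v - 2 * dotv u v + dotv u u.
  by rewrite dotvBB (dotvC v u).
have Gvu : dotv g (v - u) = dotv g v - dotv g u by rewrite [LHS]dotvBr.
have vu0 : 0 <= dotv (v - u) (v - u) := dotv_ge0 _.
have Eu : enorm u = t.
  apply/eqP; rewrite eq_le F2 /=; rewrite leNgt; apply/negP => Hlt.
  have tp : 0 < t by apply: le_lt_trans e0 Hlt.
  have Hl2 : dotv u u < t ^+ 2 by rewrite -ee; nra.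
  have [s [/andP[s0 s1] Hs]] := @small_s (dotv u u) (t ^+ 2) (dotv u (v - u)) _ vu0
     (ltW Hl2) (or_introl Hl2).
  have H : 0 <= s * (dotv g v - dotv g u).
    by apply: F3; [rewrite ltW // s1 | rewrite Hexp].
    have : 0 <= dotv g v - dotv g u by rewrite -(pmulr_rge0 _ s0).
    nra.
clearbody u v.
have Nv : dotv (- v) (- v) = dotv v v by rewrite dotvNl dotvC dotvNl opprK.
rewrite Ezs Eks dotvBB Nv.
have Ea : dotv u u = t ^+ 2 by rewrite -ee Eu.
rewrite Ea.
have [Hb|Hb] := lerP (dotv u u) (dotv u v); first by lra.
have Hb' : dotv u (v - u) < 0 by rewrite Evu; lra.
have Eal : dotv u u <= t ^+ 2 by rewrite Ea.
have [s [/andP[s0 s1] Hs]] := @small_s (dotv u u) (t ^+ 2) (dotv u (v - u)) _ vu0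
     Eal (or_intror Hb').
have H : 0 <= s * (dotv g v - dotv g u).
  by apply: F3; [rewrite ltW // s1 | rewrite Hexp].
have Hg : 0 <= dotv g v - dotv g u by rewrite -(pmulr_rge0 _ s0).
rewrite Eu in F4.
have gu : dotv g u = - (q * t) by lra.
have gv : dotv g v = - (q * t) by lra.
set w := q *: u + t *: g.
have Nw : dotv w w = 0.
  rewrite /w !(dotvDl, dotvDr, dotvZl, dotvZr) (dotvC u g) gu Ea -qq; ring.
have := CS w v; rewrite Nw mul0r => Hc.
have wv : dotv w v = 0.
  by apply/eqP; rewrite -sqrf_eq0 eq_le Hc sqr_ge0.
move: wv; rewrite /w dotvDl !dotvZl gv => wv.
have : q * (dotv u v - t ^+ 2) = 0 by rewrite -wv; ring.
move/eqP; rewrite mulf_eq0 (gt_eqF q0) /= subr_eq0 => /eqP E2.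
lra.
Qed.

Lemma dotv_eq0 u : dotv u u = 0 -> u = 0.
Proof.
move=> v0; apply/rowP => i; rewrite mxE; apply/eqP; rewrite -sqrf_eq0 expr2.
have /psumr_eq0P H := v0.
by apply/eqP; apply: H => // j _; rewrite -expr2 sqr_ge0.
Qed.

Lemma jensen (f : 'rV[R]_d -> R) (x : nat -> 'rV[R]_d) (n : nat) :
  convex_fun f ->
  f ((n.+1%:R)^-1 *: \sum_(k < n.+1) x k) <= (n.+1%:R)^-1 * \sum_(k < n.+1) f (x k).
Proof.
move=> cf; elim: n => [|n IH].
  by rewrite !big_ord1 invr1 scale1r mul1r.
rewrite big_ord_recr [X in _ <= _ * X]big_ord_recr /=.
set S := \sum_(i < n.+1) x i.
set T := \sum_(i < n.+1) f (x i).
have n1 : (0 : R) < n.+1%:R by rewrite ltr0n.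
have n2 : (0 : R) < n.+2%:R by rewrite ltr0n.
set p := (n.+2%:R)^-1.
have p0 : 0 <= p by rewrite /p invr_ge0 ltW.
have p1 : p <= 1 by rewrite /p invf_le1 // ler1n.
have E : p *: (S + x n.+1) = p *: x n.+1 + (1 - p) *: ((n.+1%:R)^-1 *: S).
  apply/rowP => i; rewrite !mxE /p.
  rewrite -[n.+2]addn1 natrD -[n.+1]addn1 natrD in n2 *.
  field. rewrite -[n.+1]addn1 natrD in n1.
  by apply/andP; split; apply/negP => /eqP H; rewrite H in n1 n2; rewrite ltxx in n1 n2 *.
rewrite E.
apply: le_trans (cf _ _ _ _) _; first by rewrite p0 p1.
have H2 : (1 - p) * f ((n.+1%:R)^-1 *: S) <= (1 - p) * ((n.+1%:R)^-1 * T).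
  by apply: ler_wpM2l => //; rewrite subr_ge0.
have -> : p * (T + f (x n.+1)) = p * f (x n.+1) + (1 - p) * ((n.+1%:R)^-1 * T).
  rewrite /p -[n.+2]addn1 natrD -[n.+1]addn1 natrD in n1 n2 *.
  field.
  by apply/andP; split; apply/negP => /eqP H; rewrite H ltxx in n1 n2.
by rewrite lerD2l.
Qed.

Lemma sum_cs (n : nat) (r : nat -> R) :
  (\sum_(k < n) r k) ^+ 2 <= n%:R * \sum_(k < n) r k ^+ 2.
Proof.
elim: n => [|n IH]; first by rewrite !big_ord0 expr0n mul0r.
case: n IH => [|n] IH.
  by rewrite !big_ord1 mul1r.
rewrite [in X in _ <= _ * X]big_ord_recr [in X in X <= _]big_ord_recr /=.
set S := \sum_(i < n.+1) r i. set Q := \sum_(i < n.+1) r i ^+ 2.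
rewrite -/S -/Q in IH.
have Q0 : 0 <= Q by apply: sumr_ge0 => i _; exact: sqr_ge0.
have n0 : (0 : R) < n.+1%:R by rewrite ltr0n.
have -> : n.+2%:R = n.+1%:R + 1 :> R by rewrite -addn1 natrD.
have H : 0 <= n.+1%:R * (Q + n.+1%:R * r n.+1 ^+ 2 - 2 * S * r n.+1).
  have := sqr_ge0 (S - n.+1%:R * r n.+1). nra.
have : 0 <= Q + n.+1%:R * r n.+1 ^+ 2 - 2 * S * r n.+1 by rewrite -(pmulr_rge0 _ n0).
nra.
Qed.
End H.

Theorem theorem6 (R : realType) (d : nat) (X : set 'rV[R]_d)
  (f : 'rV[R]_d -> R) (G : R) (xs : 'rV[R]_d)
  (x g : nat -> 'rV[R]_d) :
  X !=set0 -> closed X -> convex_set X ->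
  convex_fun f ->
  0 < G ->
  (forall y gy, X y -> subdiff f y gy -> enorm gy <= G) ->
  is_argmin_on X f xs ->
  X (x 0%N) ->
  (forall k : nat,
     (subdiff f (x k) 0 -> x k.+1 = x k) /\
     (~ subdiff f (x k) 0 ->
        subdiff f (x k) (g k) /\
        is_argmin_on (X `&` eball (x k) ((f (x k) - f xs) / enorm (g k)))
                     (dotv (g k)) (x k.+1))) ->
  forall K : nat, (1 <= K)%N ->
    (K%:R)^-1 * \sum_(k < K) (f (x k) - f xs) ^+ 2
      <= G ^+ 2 * enorm (x 0%N - xs) ^+ 2 / K%:R
    /\ f ((K%:R)^-1 *: \sum_(k < K) x k) - f xs
      <= G * enorm (x 0%N - xs) / Num.sqrt (K%:R).
Proof.
move=> Xne clX cX cf G0 bnd [Xs amin] X0 Hstep K K1.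
have Xk : forall k, X (x k).
  elim=> // k IH; have [H|H] := pselect (subdiff f (x k) 0).
  - by rewrite (Hstep k).1.
  - by have [_ [[? _] _]] := (Hstep k).2 H.
have r0 : forall k, 0 <= f (x k) - f xs by move=> k; rewrite subr_ge0 amin.
pose D := fun k => dotv (x k - xs) (x k - xs).
have per : forall k, (f (x k) - f xs) ^+ 2 <= G ^+ 2 * (D k - D k.+1).
  move=> k; have [H|H] := pselect (subdiff f (x k) 0).
  - have := H xs; rewrite dotv0l addr0 => h.
    have -> : f (x k) - f xs = 0 by have := r0 k; lra.
    by rewrite /D (Hstep k).1 // subrr mulr0 expr0n /= lexx.
  - have [sg am] := (Hstep k).2 H.
    have gp : 0 < dotv (g k) (g k).
      rewrite lt_neqAle dotv_ge0 andbT eq_sym; apply/negP => /eqP e.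
      by apply: H; rewrite -(dotv_eq0 _ e).
    have fle : f xs <= f (x k) by apply: amin.
    have st := step _ _ _ _ _ _ cX (Xk k) Xs sg gp fle am.
    have qG := bnd _ _ (Xk k) sg.
    have q0 : 0 < enorm (g k) by rewrite /enorm sqrtr_gt0.
    have rqt : f (x k) - f xs = enorm (g k) * ((f (x k) - f xs) / enorm (g k)).
      by rewrite mulrC divfK // gt_eqF.
    move: st qG q0 rqt; rewrite /D.
    set q := enorm (g k); set t := (f (x k) - f xs) / q.
    set r := f (x k) - f xs; set a := dotv _ _; set b := dotv _ _.
    move=> st qG q0 rqt.
    have qq : q ^+ 2 <= G ^+ 2 by nra.
    have tt := sqr_ge0 t.
    have : q ^+ 2 * t ^+ 2 <= G ^+ 2 * t ^+ 2 by nra.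
    rewrite rqt; nra.
have sumb : forall n, \sum_(k < n) (f (x k) - f xs) ^+ 2 <= G ^+ 2 * (D 0%N - D n).
  elim=> [|n IH]; first by rewrite big_ord0 subrr mulr0.
  rewrite big_ord_recr /=; have := per n; nra.
have D0 : D 0%N = enorm (x 0%N - xs) ^+ 2 by rewrite enorm_sqr.
have DK : 0 <= D K := dotv_ge0 _.
have S2 : \sum_(k < K) (f (x k) - f xs) ^+ 2 <= G ^+ 2 * enorm (x 0%N - xs) ^+ 2.
  have := sumb K; rewrite -D0; have := sqr_ge0 G; nra.
split.
  by rewrite mulrC; apply: ler_wpM2r => //; rewrite invr_ge0 ler0n.
clear DK; case: K K1 S2 => // n _ S2.
have J := jensen f x n cf.
have Kp : (0 : R) < n.+1%:R by rewrite ltr0n.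
have avg : (n.+1%:R)^-1 * \sum_(k < n.+1) f (x k) - f xs
         = (n.+1%:R)^-1 * \sum_(k < n.+1) (f (x k) - f xs).
  rewrite sumrB mulrBr; congr (_ - _).
  by rewrite sumr_const card_ord -[f xs *+ _]mulr_natl mulrA mulVf ?mul1r // gt_eqF.
set S1 := \sum_(k < n.+1) (f (x k) - f xs) in avg.
have S10 : 0 <= S1 by apply: sumr_ge0 => k _; exact: r0.
have cs := sum_cs n.+1 (fun k => f (x k) - f xs).
rewrite -/S1 /= in cs.
set e := enorm (x 0%N - xs) in S2 *.
have e0 : 0 <= e := enorm_ge0 _.
set sk := Num.sqrt (n.+1%:R : R).
have sk0 : 0 < sk by rewrite /sk sqrtr_gt0.
have skK : sk ^+ 2 = n.+1%:R by rewrite /sk sqr_sqrtr // ltW.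
set K := (n.+1%:R : R) in Kp avg cs skK *.
have S1b : S1 <= G * e * sk.
  have h : S1 ^+ 2 <= (G * e * sk) ^+ 2.
    rewrite !exprMn skK; apply: le_trans cs _; rewrite mulrC; apply: ler_wpM2r => //.
  have Ge : 0 <= G * e * sk by apply: mulr_ge0; [apply: mulr_ge0 => //|]; exact: ltW.
  by move: h; rewrite ler_sqr ?nnegrE.
have E : G * e / sk = K^-1 * (G * e * sk).
  rewrite -skK; field; exact: lt0r_neq0.
rewrite E; apply: le_trans (_ : K^-1 * \sum_(k < n.+1) f (x k) - f xs <= _).
  by rewrite lerD2r.
by rewrite avg; apply: ler_wpM2l => //; rewrite invr_ge0 ltW.
Qed.
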